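(* Let $\phi(t,x)=(2\pi)^{-1/2}\int_{\mathbb{R}} e^{i(kx-\hbar k^2t/(2m))}\varphi(k)\,dk$ be a freely evolving wave packet, where $\varphi\in C^1(\mathbb{R})$ has $\mathrm{supp}\,\varphi\subseteq[a_1,a_2]$ with $0<a_1<a_2$. Let $j(t,x)=\frac{\hbar}{m}\mathrm{Im}\big(\overline{\phi(t,x)}\,\partial_x\phi(t,x)\big)$ be its probability current density. Then for every fixed $\tau\in\mathbb{R}$, \[ \lim_{M\to\infty}\int_{-M}^{\tau} j(s,M)\,ds=0 . \]
   Context: $\hbar,m>0$ are constants; $\phi$ is the solution of the free Schrödinger equation $i\hbar\partial_t\phi=-\frac{\hbar^2}{2m}\partial_x^2\phi$ with initial Fourier transform $\varphi$. *)

(* Defs.v *)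
From Stdlib Require Import Reals.
From Coquelicot Require Export Coquelicot.
Open Scope R_scope.

Definition phase (hbar m t x k : R) : R := k * x - hbar * k ^ 2 * t / (2 * m).

Definition cexpi (theta : R) : C := (cos theta, sin theta).

Definition phi (hbar m : R) (vphi : R -> C) (t x : R) : C :=
  Cmult (RtoC (/ sqrt (2 * PI)))
    (@RInt_gen C_R_CompleteNormedModule (fun k => Cmult (cexpi (phase hbar m t x k)) (vphi k))
       (Rbar_locally m_infty) (Rbar_locally p_infty)).

Definition dx_phi (hbar m : R) (vphi : R -> C) (t x : R) : C :=
  (Derive (fun y => Re (phi hbar m vphi t y)) x,
   Derive (fun y => Im (phi hbar m vphi t y)) x).

Definition current (hbar m : R) (vphi : R -> C) (t x : R) : R :=
  hbar / m * Im (Cmult (Cconj (phi hbar m vphi t x)) (dx_phi hbar m vphi t x)).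

(* Main.v *)
Require Import Defs.
From Stdlib Require Import Reals Lra.
From Coquelicot Require Import Coquelicot.
Open Scope R_scope.

Lemma cont2_gen (h al be w : R -> R) (x y : R) :
  (forall z, continuous h z) -> (forall k, continuous al k) -> (forall k, continuous be k) ->
  (forall k, continuous w k) ->
  continuity_2d_pt (fun u k => h (al k * u + be k) * w k) x y.
Proof.
  intros Hh Hal Hbe Hw.
  apply continuity_2d_pt_filterlim.
  change (continuous (fun z : R * R => mult (h (plus (mult (al (snd z)) (fst z)) (be (snd z)))) (w (snd z))) (x, y)).
  apply (@continuous_mult (prod_UniformSpace R_UniformSpace R_UniformSpace) R_AbsRing).
  - apply continuous_comp with (f := fun z : R*R => plus (mult (al (snd z)) (fst z)) (be (snd z))).
    + apply (@continuous_plus (prod_UniformSpace R_UniformSpace R_UniformSpace) R_AbsRing).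
      * apply (@continuous_mult (prod_UniformSpace R_UniformSpace R_UniformSpace) R_AbsRing).
        -- apply continuous_comp with (f := snd). apply continuous_snd. apply Hal.
        -- apply continuous_fst.
      * apply continuous_comp with (f := snd). apply continuous_snd. apply Hbe.
    + apply Hh.
  - apply continuous_comp with (f := snd). apply continuous_snd. apply Hw.
Qed.

Lemma cont_gen (h al be w : R -> R) (y : R) :
  (forall z, continuous h z) -> (forall k, continuous al k) -> (forall k, continuous be k) ->
  (forall k, continuous w k) -> forall k,
  continuous (fun k => h (al k * y + be k) * w k) k.
Proof.
  intros Hh Hal Hbe Hw k.
  change (continuous (fun k => mult (h (plus (mult (al k) y) (be k))) (w k)) k).
  apply (@continuous_mult R_UniformSpace R_AbsRing); [|apply Hw].
  apply continuous_comp with (f := fun k => plus (mult (al k) y) (be k)); [|apply Hh].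
  apply (@continuous_plus R_UniformSpace R_AbsRing); [|apply Hbe].
  apply (@continuous_mult R_UniformSpace R_AbsRing); [apply Hal| apply continuous_const].
Qed.

Lemma deriv_gen_pt (h h' al be w : R -> R) (k y : R) :
  (forall z, is_derive h z (h' z)) ->
  is_derive (fun u => h (al k * u + be k) * w k) y (h' (al k * y + be k) * (al k * w k)).
Proof.
  intros Hd.
  replace (h' (al k * y + be k) * (al k * w k)) with ((al k * h' (al k * y + be k)) * w k) by ring.
  apply (is_derive_scal_l (fun u => h (al k * u + be k)) y _ (w k)).
  apply (is_derive_comp h (fun u => al k * u + be k) y).
  apply Hd.
  auto_derive; auto; ring.
Qed.

Lemma param_deriv (h h' al be w : R -> R) (a b y0 : R) :
  (forall z, is_derive h z (h' z)) -> (forall z, continuous h' z) ->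
  (forall k, continuous al k) -> (forall k, continuous be k) -> (forall k, continuous w k) ->
  is_derive (fun y => RInt (fun k => h (al k * y + be k) * w k) a b) y0
    (RInt (fun k => h' (al k * y0 + be k) * (al k * w k)) a b).
Proof.
  intros Hd Hc' Hal Hbe Hw.
  assert (Hh : forall z, continuous h z).
  { intro z. apply (@ex_derive_continuous R_AbsRing R_NormedModule). eexists. apply Hd. }
  assert (HD : forall u k, Derive (fun z => h (al k * z + be k) * w k) u = h' (al k * u + be k) * (al k * w k)).
  { intros u k. apply is_derive_unique. apply deriv_gen_pt. exact Hd. }
  assert (E : RInt (fun k => h' (al k * y0 + be k) * (al k * w k)) a b =
              RInt (fun k => Derive (fun z => h (al k * z + be k) * w k) y0) a b).
  { apply RInt_ext. intros; rewrite HD; reflexivity. }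
  rewrite E.
  apply (is_derive_RInt_param (fun y k => h (al k * y + be k) * w k)).
  - apply filter_forall. intros x k _. eexists. apply deriv_gen_pt. exact Hd.
  - intros k _. apply continuity_2d_pt_ext with (f := fun u k => h' (al k * u + be k) * (al k * w k)).
    + intros; rewrite HD; reflexivity.
    + apply cont2_gen; auto. intro k'. apply (@continuous_mult R_UniformSpace R_AbsRing al w); auto.
  - apply filter_forall. intros x. apply (@ex_RInt_continuous R_CompleteNormedModule). intros z _.
    apply cont_gen; auto.
Qed.

Lemma cM (f g : R -> R) x : continuous f x -> continuous g x -> continuous (fun y => f y * g y) x.
Proof. apply (@continuous_mult R_UniformSpace R_AbsRing). Qed.
Lemma cP (f g : R -> R) x : continuous f x -> continuous g x -> continuous (fun y => f y + g y) x.
Proof. apply (@continuous_plus R_UniformSpace R_AbsRing R_NormedModule). Qed.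
Lemma cK (c x : R) : continuous (fun _ : R => c) x.
Proof. apply continuous_const. Qed.
Lemma cI (x : R) : continuous (fun y : R => y) x.
Proof. apply continuous_id. Qed.
Lemma cO (f h : R -> R) x : continuous f x -> continuous h (f x) -> continuous (fun y => h (f y)) x.
Proof. intros; apply (continuous_comp f h); auto. Qed.
Lemma cN (f : R -> R) x : continuous f x -> continuous (fun y => - f y) x.
Proof. intros H. apply (cO f Ropp); auto. apply (@continuous_opp R_UniformSpace R_AbsRing R_NormedModule (fun y => y)). apply cI. Qed.
Lemma cV (f : R -> R) x : continuous f x -> f x <> 0 -> continuous (fun y => / f y) x.
Proof. intros; apply continuous_Rinv_comp; auto. Qed.

Lemma ibp (h g w w' : R -> R) (x c a b L W0 W1 : R) :
  a <= b ->
  (forall z, is_derive g z (h z)) -> (forall z, continuous h z) -> (forall z, Rabs (g z) <= 1) ->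
  (forall k, is_derive w k (w' k)) -> (forall k, continuous w' k) -> w a = 0 -> w b = 0 ->
  0 < L -> (forall k, a <= k <= b -> L <= x + 2 * c * k) ->
  (forall k, a <= k <= b -> Rabs (w k) <= W0) ->
  (forall k, a <= k <= b -> Rabs (w' k) <= W1) ->
  Rabs (RInt (fun k => h (x * k + c * k ^ 2) * w k) a b) <= (b - a) * (W1 / L + W0 * Rabs (2 * c) / L ^ 2).
Proof.
  intros Hab Hg Hh Hg1 Hw Hw' Wa Wb HL HD HW0 HW1.
  set (th := fun k => x * k + c * k ^ 2).
  set (D := fun k => x + 2 * c * k).
  set (q' := fun k => (w' k * D k - w k * (2 * c)) / (D k) ^ 2).
  assert (Hwc : forall k, continuous w k).
  { intro k. apply (@ex_derive_continuous R_AbsRing R_NormedModule). eexists; apply Hw. }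
  assert (Hgc : forall k, continuous g k).
  { intro k. apply (@ex_derive_continuous R_AbsRing R_NormedModule). eexists; apply Hg. }
  assert (Hthc : forall k, continuous th k).
  { intro k. unfold th. apply cP. apply cM; [apply cK|apply cI]. apply cM; [apply cK|].
    apply (cM (fun y => y) (fun y => y ^ 1)); [apply cI|]. apply (cM (fun y => y) (fun _ => 1)); [apply cI|apply cK]. }
  assert (HDpos : forall k, a <= k <= b -> 0 < D k).
  { intros k Hk. specialize (HD k Hk). unfold D. lra. }
  assert (Hdf : forall k, Rmin a b <= k <= Rmax a b ->
     is_derive (fun k => g (th k) * (w k / D k)) k (h (th k) * w k + g (th k) * q' k)).
  { intros k Hk. rewrite Rmin_left in Hk by lra. rewrite Rmax_right in Hk by lra.
    assert (Dk := HDpos k Hk).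
    assert (H1 : is_derive th k (D k)). { unfold th, D. auto_derive; auto. ring. }
    assert (H2 : is_derive D k (2 * c)). { unfold D. auto_derive; auto. ring. }
    assert (H3 := is_derive_div w D k (w' k) (2 * c) (Hw k) H2 ltac:(lra)).
    assert (H4 := is_derive_comp g th k (h (th k)) (D k) (Hg _) H1).
    assert (H5 := is_derive_mult (fun k => g (th k)) (fun k => w k / D k) k _ _ H4 H3 ltac:(intros; apply Rmult_comm)).
    simpl in H5. unfold q'.
    replace (h (th k) * w k + g (th k) * ((w' k * D k - w k * (2 * c)) / D k ^ 2)) with
      (plus (mult (scal (D k) (h (th k))) (w k / D k)) (mult (g (th k)) ((w' k * D k - w k * (2 * c)) / D k ^ 2))).
    exact H5.
    unfold plus, mult, scal; simpl. unfold mult; simpl. field. lra. }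
  assert (Hq'c : forall k, a <= k <= b -> continuous q' k).
  { intros k Hk. assert (Dk := HDpos k Hk). unfold q'.
    assert (HDc : forall k, continuous D k).
    { intro k0. unfold D. apply cP; [apply cK|]. apply cM; [apply cK|apply cI]. }
    apply cM.
    - apply cP. apply cM; auto. apply cN. apply cM; auto. apply cK.
    - apply cV. apply (cM D (fun y => D y ^ 1)); auto. apply (cM D (fun _ => 1)); auto. apply cK.
      apply pow_nonzero. lra. }
  assert (Hc1 : forall k, continuous (fun k => h (th k) * w k) k).
  { intro k. apply cM; auto. apply cO; auto. }
  assert (Hc2 : forall k, a <= k <= b -> continuous (fun k => g (th k) * q' k) k).
  { intros k Hk. apply cM; auto. apply cO; auto. }
  assert (Hmm : forall k, Rmin a b <= k <= Rmax a b -> a <= k <= b).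
  { intros k Hk. rewrite Rmin_left in Hk by lra. rewrite Rmax_right in Hk by lra. exact Hk. }
  assert (E1 : is_RInt (fun k => h (th k) * w k + g (th k) * q' k) a b 0).
  { replace 0 with (minus (g (th b) * (w b / D b)) (g (th a) * (w a / D a))).
    apply (is_RInt_derive (fun k => g (th k) * (w k / D k))).
    - exact Hdf.
    - intros k Hk. apply cP; auto.
    - rewrite Wa, Wb. unfold minus, plus, opp; simpl. unfold Rdiv. ring. }
  assert (X1 : ex_RInt (fun k => h (th k) * w k) a b).
  { apply (@ex_RInt_continuous R_CompleteNormedModule). intros; auto. }
  assert (X2 : ex_RInt (fun k => g (th k) * q' k) a b).
  { apply (@ex_RInt_continuous R_CompleteNormedModule). intros; auto. }
  assert (E2 := RInt_plus _ _ a b X1 X2).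
  assert (E3 := is_RInt_unique _ _ _ _ E1).
  change (RInt (fun k => plus (h (th k) * w k) (g (th k) * q' k)) a b = 0) in E3.
  assert (E4 : plus (RInt (fun k => h (th k) * w k) a b) (RInt (fun k => g (th k) * q' k) a b) = 0) by (rewrite <- E2; exact E3).
  clear E2 E3.
  change (Rabs (RInt (fun k => h (th k) * w k) a b) <= (b - a) * (W1 / L + W0 * Rabs (2 * c) / L ^ 2)).
  replace (RInt (fun k => h (th k) * w k) a b) with (- RInt (fun k => g (th k) * q' k) a b).
  2:{ unfold plus in E4; simpl in E4. lra. }
  rewrite Rabs_Ropp.
  apply abs_RInt_le_const; auto.
  intros k Hk. assert (Dk := HDpos k Hk). assert (LD : L <= D k) by (unfold D; apply HD; auto).
  rewrite Rabs_mult.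
  apply Rle_trans with (1 * Rabs (q' k)).
  apply Rmult_le_compat_r. apply Rabs_pos. apply Hg1.
  rewrite Rmult_1_l. unfold q'.
  replace ((w' k * D k - w k * (2 * c)) / D k ^ 2) with (w' k / D k - w k * (2 * c) / D k ^ 2) by (field; lra).
  eapply Rle_trans. apply Rabs_triang. rewrite Rabs_Ropp.
  apply Rplus_le_compat.
  - unfold Rdiv. rewrite Rabs_mult, Rabs_inv, (Rabs_right (D k)) by lra.
    apply Rmult_le_compat. apply Rabs_pos. left; apply Rinv_0_lt_compat; lra.
    apply HW1; auto. apply Rinv_le_contravar; lra.
  - unfold Rdiv. rewrite Rabs_mult, (Rabs_mult (w k) (2 * c)), Rabs_inv, (Rabs_right (D k ^ 2)) by (apply Rle_ge, pow_le; lra).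
    apply Rmult_le_compat.
    apply Rmult_le_pos; apply Rabs_pos. left; apply Rinv_0_lt_compat, pow_lt; lra.
    apply Rmult_le_compat_r. apply Rabs_pos. apply HW0; auto.
    apply Rinv_le_contravar. apply pow_lt; lra. apply pow_incr; lra.
Qed.

Lemma is_derive_fstC (f : R -> C) x l : @is_derive R_AbsRing C_R_NormedModule f x l -> is_derive (fun y => fst (f y)) x (fst l).
Proof.
  unfold is_derive. intro H.
  apply (filterdiff_comp f fst (fun y => scal y l) fst H).
  apply filterdiff_linear. apply is_linear_fst.
Qed.
Lemma is_derive_sndC (f : R -> C) x l : @is_derive R_AbsRing C_R_NormedModule f x l -> is_derive (fun y => snd (f y)) x (snd l).
Proof.
  unfold is_derive. intro H.
  apply (filterdiff_comp f snd (fun y => scal y l) snd H).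
  apply filterdiff_linear. apply is_linear_snd.
Qed.

Lemma is_RInt_gen_zero {V : NormedModule R_AbsRing} (Fa Fb : (R -> Prop) -> Prop) {FFa : Filter Fa} {FFb : Filter Fb} :
  is_RInt_gen (fun _ : R => @zero V) Fa Fb zero.
Proof.
  intros P HP. unfold filtermapi. apply (@filter_forall _ (filter_prod Fa Fb) _). intros ab. exists zero. split.
  - pose proof (@is_RInt_const V (fst ab) (snd ab) zero) as H.
    rewrite (@scal_zero_r R_Ring (NormedModule.ModuleSpace R_AbsRing V)) in H. exact H.
  - apply locally_singleton. exact HP.
Qed.

Lemma RInt_gen_supp (f : R -> C) (a b : R) : a <= b ->
  (forall k, k < a \/ b < k -> f k = zero) -> @ex_RInt C_R_NormedModule f a b ->
  @RInt_gen C_R_CompleteNormedModule f (Rbar_locally m_infty) (Rbar_locally p_infty) = @RInt C_R_CompleteNormedModule f a b.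
Proof.
  intros Hab Hz Hex.
  apply is_RInt_gen_unique.
  replace (@RInt C_R_CompleteNormedModule f a b) with (@plus C_AbelianMonoid zero (plus (@RInt C_R_CompleteNormedModule f a b) zero)) by (rewrite plus_zero_r, plus_zero_l; reflexivity).
  apply (@is_RInt_gen_Chasles C_R_NormedModule _ _ _ _ f a).
  - apply (@is_RInt_gen_ext C_R_NormedModule _ _ _ _ (fun _ => zero)).
    + apply Filter_prod with (Q := fun x => x < a) (R := fun y => y = a).
      * exists a. intros; auto.
      * reflexivity.
      * intros x y Hx Hy t Ht. simpl in Ht. subst y. symmetry. apply Hz. left.
        rewrite Rmax_right in Ht by lra. lra.
    + exact (@is_RInt_gen_zero C_R_NormedModule _ _ _ _).
  - apply (@is_RInt_gen_Chasles C_R_NormedModule _ _ _ _ f b).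
    + apply is_RInt_gen_at_point. exact (@RInt_correct C_R_CompleteNormedModule f a b Hex).
    + apply (@is_RInt_gen_ext C_R_NormedModule _ _ _ _ (fun _ => zero)).
      * apply Filter_prod with (Q := fun y => y = b) (R := fun x => b < x).
        -- reflexivity.
        -- exists b. intros; auto.
        -- intros x y Hx Hy t Ht. simpl in Ht. subst x. symmetry. apply Hz. right.
           rewrite Rmin_left in Ht by lra. lra.
      * exact (@is_RInt_gen_zero C_R_NormedModule _ _ _ _).
Qed.
Definition J (hbar m : R) (h w : R -> R) (a b t x : R) :=
  RInt (fun k => h (phase hbar m t x k) * w k) a b.

Lemma J_dx hbar m h h' w a b t x :
  (forall z, is_derive h z (h' z)) -> (forall z, continuous h' z) -> (forall k, continuous w k) ->
  is_derive (fun y => J hbar m h w a b t y) x (J hbar m h' (fun k => k * w k) a b t x).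
Proof.
  intros Hd Hc Hw.
  unfold J.
  apply is_derive_ext with (f := fun y => RInt (fun k => h (k * y + (- (hbar * k ^ 2 * t / (2 * m)))) * w k) a b).
  { intro y. apply RInt_ext. intros k _. unfold phase; f_equal; f_equal; ring. }
  replace (RInt (fun k => h' (phase hbar m t x k) * (k * w k)) a b) with
     (RInt (fun k => h' (k * x + (- (hbar * k ^ 2 * t / (2 * m)))) * (k * w k)) a b).
  2:{ apply RInt_ext. intros k _. unfold phase; f_equal; f_equal; ring. }
  apply (param_deriv h h' (fun k => k) (fun k => - (hbar * k ^ 2 * t / (2 * m))) w); auto.
  - intro; apply cI.
  - intro k. apply cN. apply cM; [|apply cK]. apply cM; [|apply cK]. apply cM; [apply cK|].
    apply (cM (fun y => y) (fun y => y ^ 1)); [apply cI|]. apply (cM (fun y => y) (fun _ => 1)); [apply cI|apply cK].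
Qed.

Lemma J_ct hbar m h h' w a b t x :
  (forall z, is_derive h z (h' z)) -> (forall z, continuous h' z) -> (forall k, continuous w k) ->
  continuous (fun s => J hbar m h w a b s x) t.
Proof.
  intros Hd Hc Hw.
  apply (@ex_derive_continuous R_AbsRing R_NormedModule).
  unfold J.
  apply ex_derive_ext with (f := fun y => RInt (fun k => h ((- (hbar * k ^ 2 / (2 * m))) * y + k * x) * w k) a b).
  { intro y. apply RInt_ext. intros k _. unfold phase; f_equal; f_equal; unfold Rdiv; ring. }
  eexists.
  apply (param_deriv h h' (fun k => - (hbar * k ^ 2 / (2 * m))) (fun k => k * x) w); auto.
  - intro k. apply cN. apply cM; [|apply cK]. apply cM; [apply cK|].
    apply (cM (fun y => y) (fun y => y ^ 1)); [apply cI|]. apply (cM (fun y => y) (fun _ => 1)); [apply cI|apply cK].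
  - intro k. apply cM; [apply cI|apply cK].
Qed.

Lemma phi_parts hbar m (vphi : R -> C) a1 a2 t x :
  a1 <= a2 ->
  (forall k, continuous (fun k => fst (vphi k)) k) -> (forall k, continuous (fun k => snd (vphi k)) k) ->
  (forall k, k < a1 \/ a2 < k -> vphi k = 0%C) ->
  fst (phi hbar m vphi t x) = / sqrt (2 * PI) * (J hbar m cos (fun k => fst (vphi k)) a1 a2 t x - J hbar m sin (fun k => snd (vphi k)) a1 a2 t x) /\
  snd (phi hbar m vphi t x) = / sqrt (2 * PI) * (J hbar m cos (fun k => snd (vphi k)) a1 a2 t x + J hbar m sin (fun k => fst (vphi k)) a1 a2 t x).
Proof.
  intros Ha Hu Hv Hs.
  set (g := fun k => Cmult (cexpi (phase hbar m t x k)) (vphi k)).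
  assert (Hth : forall k, continuous (fun k => phase hbar m t x k) k).
  { intro k. unfold phase. apply cP. apply cM; [apply cI|apply cK]. apply cN. apply cM; [|apply cK].
    apply cM; [|apply cK]. apply cM; [apply cK|].
    apply (cM (fun y => y) (fun y => y ^ 1)); [apply cI|]. apply (cM (fun y => y) (fun _ => 1)); [apply cI|apply cK]. }
  assert (Hcos : forall k, continuous (fun k => cos (phase hbar m t x k)) k).
  { intro k. apply cO; auto. apply continuous_cos. }
  assert (Hsin : forall k, continuous (fun k => sin (phase hbar m t x k)) k).
  { intro k. apply cO; auto. apply continuous_sin. }
  set (A := RInt (fun k => fst (g k)) a1 a2).
  set (B := RInt (fun k => snd (g k)) a1 a2).
  assert (HI : @is_RInt C_R_NormedModule g a1 a2 (A, B)).
  { apply (@is_RInt_fct_extend_pair R_NormedModule R_NormedModule g).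
    - apply (@RInt_correct R_CompleteNormedModule). apply (@ex_RInt_continuous R_CompleteNormedModule).
      intros k _. unfold g, Cmult, cexpi; simpl.
      apply cP. apply cM; auto. apply cN. apply cM; auto.
    - apply (@RInt_correct R_CompleteNormedModule). apply (@ex_RInt_continuous R_CompleteNormedModule).
      intros k _. unfold g, Cmult, cexpi; simpl.
      apply cP; apply cM; auto. }
  assert (E : @RInt_gen C_R_CompleteNormedModule g (Rbar_locally m_infty) (Rbar_locally p_infty) = (A, B)).
  { rewrite RInt_gen_supp with (a := a1) (b := a2); auto.
    - apply (@is_RInt_unique C_R_CompleteNormedModule). exact HI.
    - intros k Hk. unfold g. rewrite (Hs k Hk). unfold Cmult; simpl. apply injective_projections; simpl; ring.
    - eexists; exact HI. }
  unfold phi. fold g. rewrite E.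
  assert (EA : A = J hbar m cos (fun k => fst (vphi k)) a1 a2 t x - J hbar m sin (fun k => snd (vphi k)) a1 a2 t x).
  { unfold A, J. rewrite <- (@RInt_minus R_CompleteNormedModule).
    - apply RInt_ext. intros k _. unfold g, Cmult, cexpi; simpl. reflexivity.
    - apply (@ex_RInt_continuous R_CompleteNormedModule). intros k _. apply cM; auto.
    - apply (@ex_RInt_continuous R_CompleteNormedModule). intros k _. apply cM; auto. }
  assert (EB : B = J hbar m cos (fun k => snd (vphi k)) a1 a2 t x + J hbar m sin (fun k => fst (vphi k)) a1 a2 t x).
  { unfold B, J. rewrite <- (@RInt_plus R_CompleteNormedModule).
    - apply RInt_ext. intros k _. unfold g, Cmult, cexpi; simpl. reflexivity.
    - apply (@ex_RInt_continuous R_CompleteNormedModule). intros k _. apply cM; auto.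
    - apply (@ex_RInt_continuous R_CompleteNormedModule). intros k _. apply cM; auto. }
  unfold Cmult, RtoC; simpl. rewrite <- EA, <- EB. split; ring.
Qed.

Lemma dphi_parts hbar m (vphi : R -> C) a1 a2 t x :
  a1 <= a2 ->
  (forall k, continuous (fun k => fst (vphi k)) k) -> (forall k, continuous (fun k => snd (vphi k)) k) ->
  (forall k, k < a1 \/ a2 < k -> vphi k = 0%C) ->
  fst (dx_phi hbar m vphi t x) = / sqrt (2 * PI) * (J hbar m (fun z => - sin z) (fun k => k * fst (vphi k)) a1 a2 t x - J hbar m cos (fun k => k * snd (vphi k)) a1 a2 t x) /\
  snd (dx_phi hbar m vphi t x) = / sqrt (2 * PI) * (J hbar m (fun z => - sin z) (fun k => k * snd (vphi k)) a1 a2 t x + J hbar m cos (fun k => k * fst (vphi k)) a1 a2 t x).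
Proof.
  intros Ha Hu Hv Hs.
  assert (Dcos : forall z, is_derive cos z (- sin z)). { intro z. auto_derive; auto; ring. }
  assert (Dsin : forall z, is_derive sin z (cos z)). { intro z. auto_derive; auto; ring. }
  assert (Cms : forall z, continuous (fun z => - sin z) z). { intro z. apply cN. apply continuous_sin. }
  unfold dx_phi; simpl. split.
  - apply is_derive_unique.
    apply is_derive_ext with (f := fun y => / sqrt (2 * PI) * (J hbar m cos (fun k => fst (vphi k)) a1 a2 t y - J hbar m sin (fun k => snd (vphi k)) a1 a2 t y)).
    { intro y. symmetry. apply (phi_parts hbar m vphi a1 a2 t y); auto. }
    apply (is_derive_scal (fun y => (J hbar m cos (fun k => fst (vphi k)) a1 a2 t y - J hbar m sin (fun k => snd (vphi k)) a1 a2 t y))).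
    apply (@is_derive_minus R_AbsRing R_NormedModule).
    + apply J_dx; auto.
    + apply J_dx; auto. apply continuous_cos.
  - apply is_derive_unique.
    apply is_derive_ext with (f := fun y => / sqrt (2 * PI) * (J hbar m cos (fun k => snd (vphi k)) a1 a2 t y + J hbar m sin (fun k => fst (vphi k)) a1 a2 t y)).
    { intro y. symmetry. apply (phi_parts hbar m vphi a1 a2 t y); auto. }
    apply (is_derive_scal (fun y => (J hbar m cos (fun k => snd (vphi k)) a1 a2 t y + J hbar m sin (fun k => fst (vphi k)) a1 a2 t y))).
    apply (@is_derive_plus R_AbsRing R_NormedModule).
    + apply J_dx; auto.
    + apply J_dx; auto. apply continuous_cos.
Qed.

Lemma zero_left (f : R -> R) a : continuous f a -> (forall k, k < a -> f k = 0) -> f a = 0.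
Proof.
  intros Hc Hz.
  apply (@filterlim_locally_unique R R_AbsRing R_NormedModule (at_left a) _ f).
  - eapply filterlim_filter_le_1. 2: exact Hc. apply filter_le_within.
  - apply filterlim_ext_loc with (f := fun _ => 0).
    + exists (mkposreal 1 Rlt_0_1). intros y _ Hy. symmetry. apply Hz. exact Hy.
    + apply filterlim_const.
Qed.

Lemma zero_right (f : R -> R) a : continuous f a -> (forall k, a < k -> f k = 0) -> f a = 0.
Proof.
  intros Hc Hz.
  apply (@filterlim_locally_unique R R_AbsRing R_NormedModule (at_right a) _ f).
  - eapply filterlim_filter_le_1. 2: exact Hc. apply filter_le_within.
  - apply filterlim_ext_loc with (f := fun _ => 0).
    + exists (mkposreal 1 Rlt_0_1). intros y _ Hy. symmetry. apply Hz. exact Hy.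
    + apply filterlim_const.
Qed.

Lemma sup_bound (f : R -> R) a b : a <= b -> (forall k, continuous f k) ->
  exists B, 0 <= B /\ forall k, a <= k <= b -> Rabs (f k) <= B.
Proof.
  intros Hab Hc.
  destruct (continuity_ab_maj (fun k => Rabs (f k)) a b Hab) as [x [Hx _]].
  { intros c _. apply continuity_pt_filterlim. apply continuous_Rabs_comp. apply Hc. }
  exists (Rabs (f x)). split. apply Rabs_pos. exact Hx.
Qed.

Lemma J_bound hbar m h g w w' a b s M L W0 W1 :
  0 < m -> a <= b ->
  (forall z, is_derive g z (h z)) -> (forall z, continuous h z) -> (forall z, Rabs (g z) <= 1) ->
  (forall k, is_derive w k (w' k)) -> (forall k, continuous w' k) -> w a = 0 -> w b = 0 ->
  0 < L -> (forall k, a <= k <= b -> L <= M - hbar * s * k / m) ->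
  (forall k, a <= k <= b -> Rabs (w k) <= W0) ->
  (forall k, a <= k <= b -> Rabs (w' k) <= W1) ->
  Rabs (J hbar m h w a b s M) <= (b - a) * (W1 / L + W0 * Rabs (hbar * s / m) / L ^ 2).
Proof.
  intros Hm Hab Hg Hh Hg1 Hw Hw' Wa Wb HL HD HW0 HW1.
  unfold J.
  replace (RInt (fun k => h (phase hbar m s M k) * w k) a b) with
     (RInt (fun k => h (M * k + (- (hbar * s / (2 * m))) * k ^ 2) * w k) a b).
  2:{ apply RInt_ext. intros k _. unfold phase; f_equal; f_equal; unfold Rdiv; ring. }
  replace (Rabs (hbar * s / m)) with (Rabs (2 * (- (hbar * s / (2 * m))))).
  2:{ replace (2 * - (hbar * s / (2 * m))) with (- (hbar * s / m)) by (field; lra). apply Rabs_Ropp. }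
  apply (ibp h g w w' M (- (hbar * s / (2 * m))) a b L W0 W1); auto.
  intros k Hk. replace (M + 2 * - (hbar * s / (2 * m)) * k) with (M - hbar * s * k / m) by (field; lra).
  auto.
Qed.

Lemma current_eq hbar m vphi s x :
  current hbar m vphi s x = hbar / m * (fst (phi hbar m vphi s x) * snd (dx_phi hbar m vphi s x) + (- snd (phi hbar m vphi s x)) * fst (dx_phi hbar m vphi s x)).
Proof. unfold current, Cmult, Cconj, Im. simpl. reflexivity. Qed.

Lemma L_ok hbar m a b tau M s k :
  0 < hbar -> 0 < m -> 0 < a -> 1 + Rabs tau + 2 * hbar * b * Rabs tau / m <= M -> -M <= s <= tau -> a <= k <= b ->
  M / 2 <= M - hbar * s * k / m.
Proof.
  intros Hh Hm Ha HM Hs Hk.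
  assert (Ht : 0 <= Rabs tau) by apply Rabs_pos.
  assert (Hq : 0 <= 2 * hbar * b * Rabs tau / m).
  { unfold Rdiv. apply Rmult_le_pos; [|left; apply Rinv_0_lt_compat; lra].
    apply Rmult_le_pos; [|lra]. apply Rmult_le_pos; lra. }
  destruct (Rle_or_lt s 0) as [H0|H0].
  - assert (hbar * s * k / m <= 0).
    { unfold Rdiv. assert (0 < / m) by (apply Rinv_0_lt_compat; lra).
      assert (hbar * (-s) * k * / m >= 0). { apply Rle_ge. repeat apply Rmult_le_pos; lra. }
      nra. }
    lra.
  - assert (Hst : s <= Rabs tau) by (pose proof (Rle_abs tau); lra).
    assert (hbar * s * k / m <= hbar * b * Rabs tau / m).
    { unfold Rdiv. apply Rmult_le_compat_r. left; apply Rinv_0_lt_compat; lra.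
      rewrite Rmult_assoc, (Rmult_assoc hbar b). apply Rmult_le_compat_l. lra.
      rewrite (Rmult_comm s k). apply Rmult_le_compat; lra. }
    assert (hbar * b * Rabs tau / m = (2 * hbar * b * Rabs tau / m) / 2) by (field; lra).
    lra.
Qed.

Lemma bound_simpl hbar m a b s M W0 W1 W0i W1i :
  0 < hbar -> 0 < m -> a <= b -> 0 < M -> Rabs s <= M -> 0 <= W0i <= W0 -> 0 <= W1i <= W1 ->
  (b - a) * (W1i / (M / 2) + W0i * Rabs (hbar * s / m) / (M / 2) ^ 2) <= (b - a) * (2 * W1 + 4 * W0 * hbar / m) / M.
Proof.
  intros Hh Hm Hab HM Hs H0 H1.
  replace ((b - a) * (2 * W1 + 4 * W0 * hbar / m) / M) with ((b - a) * ((2 * W1 + 4 * W0 * hbar / m) / M)) by (field; lra).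
  apply Rmult_le_compat_l. lra.
  assert (Ea : Rabs (hbar * s / m) = hbar * Rabs s * / m) by (unfold Rdiv; rewrite Rabs_mult, Rabs_mult, Rabs_inv, (Rabs_right hbar), (Rabs_right m) by lra; ring). rewrite Ea.
  assert (E1 : W1i / (M / 2) = 2 * W1i / M) by (field; lra).
  assert (E2 : W0i * (hbar * Rabs s * / m) / (M / 2) ^ 2 = 4 * W0i * hbar * (Rabs s / M) / m / M) by (field; lra).
  rewrite E1, E2.
  assert (Hsm : Rabs s / M <= 1). { apply (Rmult_le_reg_r M); auto. unfold Rdiv; rewrite Rmult_assoc, Rinv_l; lra. }
  assert (HsM0 : 0 <= Rabs s / M). { apply Rmult_le_pos. apply Rabs_pos. left; apply Rinv_0_lt_compat; lra. }
  assert (4 * W0i * hbar * (Rabs s / M) <= 4 * W0 * hbar).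
  { apply Rle_trans with (4 * W0i * hbar * 1). apply Rmult_le_compat_l. nra. lra. nra. }
  assert (4 * W0i * hbar * (Rabs s / M) / m <= 4 * W0 * hbar / m).
  { unfold Rdiv. apply Rmult_le_compat_r. left; apply Rinv_0_lt_compat; lra. auto. }
  replace ((2 * W1 + 4 * W0 * hbar / m) / M) with (2 * W1 / M + 4 * W0 * hbar / m / M) by (field; lra).
  apply Rplus_le_compat; unfold Rdiv; apply Rmult_le_compat_r; try (left; apply Rinv_0_lt_compat; lra); try lra.

Qed.

Lemma J_bound2 hbar m h g w w' a b s M W0 W1 W0i W1i tau :
  0 < hbar -> 0 < m -> 0 < a -> a <= b ->
  (forall z, is_derive g z (h z)) -> (forall z, continuous h z) -> (forall z, Rabs (g z) <= 1) ->
  (forall k, is_derive w k (w' k)) -> (forall k, continuous w' k) -> w a = 0 -> w b = 0 ->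
  (forall k, a <= k <= b -> Rabs (w k) <= W0i) ->
  (forall k, a <= k <= b -> Rabs (w' k) <= W1i) ->
  0 <= W0i <= W0 -> 0 <= W1i <= W1 ->
  1 + Rabs tau + 2 * hbar * b * Rabs tau / m <= M -> -M <= s <= tau ->
  Rabs (J hbar m h w a b s M) <= (b - a) * (2 * W1 + 4 * W0 * hbar / m) / M.
Proof.
  intros Hh Hm Ha Hab Hg Hhc Hg1 Hw Hw' Wa Wb HW0 HW1 H0 H1 HM Hs.
  assert (Ht : 0 <= Rabs tau) by apply Rabs_pos.
  assert (Hq : 0 <= 2 * hbar * b * Rabs tau / m).
  { unfold Rdiv. apply Rmult_le_pos; [|left; apply Rinv_0_lt_compat; lra].
    apply Rmult_le_pos; [|lra]. apply Rmult_le_pos; lra. }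
  assert (HMp : 0 < M) by lra.
  eapply Rle_trans.
  - apply (J_bound hbar m h g w w' a b s M (M / 2) W0i W1i); auto. lra.
    intros k Hk. apply (L_ok hbar m a b tau M s k); auto.
  - apply bound_simpl; auto.
    pose proof (Rle_abs tau). unfold Rabs. destruct (Rcase_abs s); lra.
Qed.

Lemma deriv_kw (w w' : R -> R) k : is_derive w k (w' k) -> is_derive (fun k => k * w k) k (w k + k * w' k).
Proof.
  intro H.
  replace (w k + k * w' k) with (plus (mult 1 (w k)) (mult k (w' k))) by (unfold plus, mult; simpl; ring).
  apply (is_derive_mult (fun k => k) w k 1 (w' k)).
  apply (@is_derive_id R_AbsRing). exact H. intros; apply Rmult_comm.
Qed.

Lemma abs_comb_m c A B X : 0 < c -> Rabs A <= X -> Rabs B <= X -> Rabs (c * (A - B)) <= c * (2 * X).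
Proof.
  intros Hc HA HB. rewrite Rabs_mult, (Rabs_right c) by lra.
  apply Rmult_le_compat_l. lra.
  eapply Rle_trans. apply Rabs_triang. rewrite Rabs_Ropp. lra.
Qed.

Lemma abs_comb_p c A B X : 0 < c -> Rabs A <= X -> Rabs B <= X -> Rabs (c * (A + B)) <= c * (2 * X).
Proof.
  intros Hc HA HB. rewrite Rabs_mult, (Rabs_right c) by lra.
  apply Rmult_le_compat_l. lra.
  eapply Rle_trans. apply Rabs_triang. lra.
Qed.

Lemma abs_cur c x1 x2 y1 y2 Q : 0 < c -> Rabs x1 <= Q -> Rabs x2 <= Q -> Rabs y1 <= Q -> Rabs y2 <= Q ->
  Rabs (c * (x1 * y1 + (- x2) * y2)) <= c * (2 * Q ^ 2).
Proof.
  intros Hc H1 H2 H3 H4. rewrite Rabs_mult, (Rabs_right c) by lra.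
  apply Rmult_le_compat_l. lra.
  eapply Rle_trans. apply Rabs_triang. rewrite !Rabs_mult, Rabs_Ropp.
  assert (0 <= Rabs x1) by apply Rabs_pos. assert (0 <= Rabs x2) by apply Rabs_pos.
  assert (0 <= Rabs y1) by apply Rabs_pos. assert (0 <= Rabs y2) by apply Rabs_pos.
  assert (Rabs x1 * Rabs y1 <= Q * Q) by (apply Rmult_le_compat; auto).
  assert (Rabs x2 * Rabs y2 <= Q * Q) by (apply Rmult_le_compat; auto).
  simpl. lra.
Qed.

Lemma final_arith C M tau eps : 0 <= C -> 0 < eps -> Rabs tau <= M -> 0 < M -> 2 * C / eps < M ->
  (tau - - M) * (C / M ^ 2) < eps.
Proof.
  intros HC He Ht HM HN.
  assert (Htau : tau <= M) by (pose proof (Rle_abs tau); lra).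
  assert (H1 : (tau - - M) * (C / M ^ 2) <= 2 * M * (C / M ^ 2)).
  { apply Rmult_le_compat_r. unfold Rdiv. apply Rmult_le_pos; auto. left; apply Rinv_0_lt_compat, pow_lt; lra. lra. }
  replace (2 * M * (C / M ^ 2)) with (2 * C / M) in H1 by (field; lra).
  assert (2 * C < eps * M).
  { apply (Rmult_lt_compat_l eps) in HN; auto. replace (eps * (2 * C / eps)) with (2 * C) in HN by (field; lra). lra. }
  assert (2 * C / M < eps).
  { apply (Rmult_lt_reg_r M); auto. replace (2 * C / M * M) with (2 * C) by (field; lra). lra. }
  lra.
Qed.

Lemma trig_facts :
  (forall z, is_derive sin z (cos z)) /\ (forall z, is_derive (fun z => - cos z) z (sin z)) /\
  (forall z, is_derive cos z (- sin z)) /\ (forall z, is_derive (fun z => - sin z) z (- cos z)) /\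
  (forall z, Rabs (sin z) <= 1) /\ (forall z, Rabs (cos z) <= 1) /\ (forall z, Rabs (- cos z) <= 1) /\
  (forall z, continuous cos z) /\ (forall z, continuous sin z) /\ (forall z, continuous (fun z => - sin z) z) /\
  (forall z, continuous (fun z => - cos z) z).
Proof.
  refine (conj _ (conj _ (conj _ (conj _ (conj _ (conj _ (conj _ (conj _ (conj _ (conj _ _))))))))));
  intro z.
  - auto_derive; auto; ring.
  - auto_derive; auto; ring.
  - auto_derive; auto; ring.
  - auto_derive; auto; ring.
  - apply Rabs_le. apply SIN_bound.
  - apply Rabs_le. apply COS_bound.
  - rewrite Rabs_Ropp. apply Rabs_le. apply COS_bound.
  - apply continuous_cos.
  - apply continuous_sin.
  - apply cN. apply continuous_sin.
  - apply cN. apply continuous_cos.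
Qed.

Theorem mainTheorem3 (hbar m a1 a2 : R) (vphi : R -> C) :
  0 < hbar -> 0 < m -> 0 < a1 -> a1 < a2 ->
  (* vphi in C^1(R) *)
  (exists dvphi : R -> C,
      (forall k, @is_derive R_AbsRing C_R_NormedModule vphi k (dvphi k)) /\ (forall k, @continuous R_UniformSpace C_R_NormedModule dvphi k)) ->
  (* supp vphi ⊆ [a1, a2] *)
  (forall k, k < a1 \/ a2 < k -> vphi k = 0%C) ->
  forall tau : R,
    is_lim (fun M => RInt (fun s => current hbar m vphi s M) (- M) tau) p_infty 0.
Proof.
  intros Hh Hm Ha1 Ha12 [dv [Hd Hdc]] Hs tau.
  destruct trig_facts as (Dsin & Dmcos & Dcos & Dmsin & Bsin & Bcos & Bmcos & Ccos & Csin & Cmsin & Cmcos).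
  set (u := fun k => fst (vphi k)).
  set (v := fun k => snd (vphi k)).
  set (du := fun k => fst (dv k)).
  set (dw := fun k => snd (dv k)).
  assert (Hu' : forall k, is_derive u k (du k)) by (intro k; apply (is_derive_fstC vphi k (dv k) (Hd k))).
  assert (Hv' : forall k, is_derive v k (dw k)) by (intro k; apply (is_derive_sndC vphi k (dv k) (Hd k))).
  assert (Hdu : forall k, continuous du k).
  { intro k. apply (continuous_comp dv fst). apply Hdc. generalize (dv k). intros [p q].
    exact (@continuous_fst R_UniformSpace R_UniformSpace p q). }
  assert (Hdw : forall k, continuous dw k).
  { intro k. apply (continuous_comp dv snd). apply Hdc. generalize (dv k). intros [p q].
    exact (@continuous_snd R_UniformSpace R_UniformSpace p q). }
  assert (Hu : forall k, continuous u k).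
  { intro k. apply (@ex_derive_continuous R_AbsRing R_NormedModule). eexists; apply Hu'. }
  assert (Hv : forall k, continuous v k).
  { intro k. apply (@ex_derive_continuous R_AbsRing R_NormedModule). eexists; apply Hv'. }
  assert (Hku : forall k, continuous (fun k => k * u k) k) by (intro k; apply cM; auto; apply cI).
  assert (Hkv : forall k, continuous (fun k => k * v k) k) by (intro k; apply cM; auto; apply cI).
  assert (Hku' : forall k, is_derive (fun k => k * u k) k (u k + k * du k)) by (intro k; apply deriv_kw; auto).
  assert (Hkv' : forall k, is_derive (fun k => k * v k) k (v k + k * dw k)) by (intro k; apply deriv_kw; auto).
  assert (Hdku : forall k, continuous (fun k => u k + k * du k) k) by (intro k; apply cP; auto; apply cM; auto; apply cI).
  assert (Hdkv : forall k, continuous (fun k => v k + k * dw k) k) by (intro k; apply cP; auto; apply cM; auto; apply cI).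
  assert (u1 : u a1 = 0).
  { apply zero_left; auto. intros k Hk. unfold u. rewrite (Hs k (or_introl Hk)). reflexivity. }
  assert (u2 : u a2 = 0).
  { apply zero_right; auto. intros k Hk. unfold u. rewrite (Hs k (or_intror Hk)). reflexivity. }
  assert (v1 : v a1 = 0).
  { apply zero_left; auto. intros k Hk. unfold v. rewrite (Hs k (or_introl Hk)). reflexivity. }
  assert (v2 : v a2 = 0).
  { apply zero_right; auto. intros k Hk. unfold v. rewrite (Hs k (or_intror Hk)). reflexivity. }
  assert (Hle : a1 <= a2) by lra.
  destruct (sup_bound u a1 a2 Hle Hu) as [B1 [B1p HB1]].
  destruct (sup_bound v a1 a2 Hle Hv) as [B2 [B2p HB2]].
  destruct (sup_bound _ a1 a2 Hle Hku) as [B3 [B3p HB3]].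
  destruct (sup_bound _ a1 a2 Hle Hkv) as [B4 [B4p HB4]].
  destruct (sup_bound du a1 a2 Hle Hdu) as [D1 [D1p HD1]].
  destruct (sup_bound dw a1 a2 Hle Hdw) as [D2 [D2p HD2]].
  destruct (sup_bound _ a1 a2 Hle Hdku) as [D3 [D3p HD3]].
  destruct (sup_bound _ a1 a2 Hle Hdkv) as [D4 [D4p HD4]].
  set (W0 := B1 + B2 + B3 + B4).
  set (W1 := D1 + D2 + D3 + D4).
  set (K := (a2 - a1) * (2 * W1 + 4 * W0 * hbar / m)).
  set (M0 := 1 + Rabs tau + 2 * hbar * a2 * Rabs tau / m).
  assert (GJ : forall h g w w' W0i W1i M s,
     (forall z, is_derive g z (h z)) -> (forall z, continuous h z) -> (forall z, Rabs (g z) <= 1) ->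
     (forall k, is_derive w k (w' k)) -> (forall k, continuous w' k) -> w a1 = 0 -> w a2 = 0 ->
     (forall k, a1 <= k <= a2 -> Rabs (w k) <= W0i) ->
     (forall k, a1 <= k <= a2 -> Rabs (w' k) <= W1i) ->
     0 <= W0i <= W0 -> 0 <= W1i <= W1 ->
     M0 <= M -> -M <= s <= tau -> Rabs (J hbar m h w a1 a2 s M) <= K / M).
  { intros. unfold K. apply (J_bound2 hbar m h g w w' a1 a2 s M W0 W1 W0i W1i tau); auto. }
  assert (Hku1 : a1 * u a1 = 0) by (rewrite u1; ring).
  assert (Hku2 : a2 * u a2 = 0) by (rewrite u2; ring).
  assert (Hkv1 : a1 * v a1 = 0) by (rewrite v1; ring).
  assert (Hkv2 : a2 * v a2 = 0) by (rewrite v2; ring).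
  assert (W0b : 0 <= B1 <= W0 /\ 0 <= B2 <= W0 /\ 0 <= B3 <= W0 /\ 0 <= B4 <= W0) by (unfold W0; lra).
  assert (W1b : 0 <= D1 <= W1 /\ 0 <= D2 <= W1 /\ 0 <= D3 <= W1 /\ 0 <= D4 <= W1) by (unfold W1; lra).
  destruct W0b as (W0b1 & W0b2 & W0b3 & W0b4).
  destruct W1b as (W1b1 & W1b2 & W1b3 & W1b4).
  set (c0 := / sqrt (2 * PI)).
  assert (Hc0 : 0 < c0).
  { unfold c0. apply Rinv_0_lt_compat. apply sqrt_lt_R0. pose proof PI_RGT_0. lra. }
  assert (Hcur : forall M s, M0 <= M -> -M <= s <= tau ->
     Rabs (current hbar m vphi s M) <= hbar / m * (2 * (c0 * (2 * (K / M))) ^ 2)).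
  { intros M s HM Hst.
    destruct (phi_parts hbar m vphi a1 a2 s M Hle Hu Hv Hs) as [P1 P2].
    destruct (dphi_parts hbar m vphi a1 a2 s M Hle Hu Hv Hs) as [P3 P4].
    rewrite current_eq. rewrite P1, P2, P3, P4. fold c0.
    apply abs_cur. apply Rdiv_lt_0_compat; auto.
    - apply abs_comb_m; auto.
      + apply (GJ cos sin u du B1 D1); auto.
      + apply (GJ sin (fun z => - cos z) v dw B2 D2); auto.
    - apply abs_comb_p; auto.
      + apply (GJ cos sin v dw B2 D2); auto.
      + apply (GJ sin (fun z => - cos z) u du B1 D1); auto.
    - apply abs_comb_p; auto.
      + apply (GJ (fun z => - sin z) cos (fun k => k * v k) (fun k => v k + k * dw k) B4 D4); auto.
      + apply (GJ cos sin (fun k => k * u k) (fun k => u k + k * du k) B3 D3); auto.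
    - apply abs_comb_m; auto.
      + apply (GJ (fun z => - sin z) cos (fun k => k * u k) (fun k => u k + k * du k) B3 D3); auto.
      + apply (GJ cos sin (fun k => k * v k) (fun k => v k + k * dw k) B4 D4); auto. }
  assert (Hcont : forall M s0, continuous (fun s => current hbar m vphi s M) s0).
  { intros M s0.
    apply continuous_ext with (f := fun s => hbar / m *
      (c0 * (J hbar m cos u a1 a2 s M - J hbar m sin v a1 a2 s M) *
       (c0 * (J hbar m (fun z => - sin z) (fun k => k * v k) a1 a2 s M + J hbar m cos (fun k => k * u k) a1 a2 s M)) +
       - (c0 * (J hbar m cos v a1 a2 s M + J hbar m sin u a1 a2 s M)) *
       (c0 * (J hbar m (fun z => - sin z) (fun k => k * u k) a1 a2 s M - J hbar m cos (fun k => k * v k) a1 a2 s M)))).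
    { intro s.
      destruct (phi_parts hbar m vphi a1 a2 s M Hle Hu Hv Hs) as [P1 P2].
      destruct (dphi_parts hbar m vphi a1 a2 s M Hle Hu Hv Hs) as [P3 P4].
      rewrite current_eq. rewrite P1, P2, P3, P4. reflexivity. }
    assert (C1 : forall w, (forall k, continuous w k) -> continuous (fun s => J hbar m cos w a1 a2 s M) s0).
    { intros w Hw. apply (J_ct hbar m cos (fun z => - sin z)); auto. }
    assert (C2 : forall w, (forall k, continuous w k) -> continuous (fun s => J hbar m sin w a1 a2 s M) s0).
    { intros w Hw. apply (J_ct hbar m sin cos); auto. }
    assert (C3 : forall w, (forall k, continuous w k) -> continuous (fun s => J hbar m (fun z => - sin z) w a1 a2 s M) s0).
    { intros w Hw. apply (J_ct hbar m (fun z => - sin z) (fun z => - cos z)); auto. }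
    apply cM. apply cK.
    apply cP; apply cM.
    - apply cM. apply cK. apply cP; [apply C1; auto | apply cN; apply C2; auto].
    - apply cM. apply cK. apply cP; [apply C3; auto | apply C1; auto].
    - apply cN. apply cM. apply cK. apply cP; [apply C1; auto | apply C2; auto].
    - apply cM. apply cK. apply cP; [apply C3; auto | apply cN; apply C1; auto]. }
  apply is_lim_spec. intro eps. simpl.
  set (Cst := hbar / m * (2 * (c0 * (2 * K)) ^ 2)).
  assert (HCst : 0 <= Cst).
  { unfold Cst. apply Rmult_le_pos. left; apply Rdiv_lt_0_compat; auto. apply Rmult_le_pos. lra. apply pow2_ge_0. }
  assert (HM0 : 1 + Rabs tau <= M0).
  { unfold M0. assert (0 <= 2 * hbar * a2 * Rabs tau / m); [|lra].
    unfold Rdiv. apply Rmult_le_pos; [|left; apply Rinv_0_lt_compat; lra].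
    apply Rmult_le_pos; [|apply Rabs_pos]. apply Rmult_le_pos; lra. }
  exists (M0 + 2 * Cst / eps).
  intros M HM.
  assert (H2C : 0 <= 2 * Cst / eps).
  { unfold Rdiv. apply Rmult_le_pos. lra. left; apply Rinv_0_lt_compat; apply cond_pos. }
  assert (HMp : 0 < M) by (pose proof (Rabs_pos tau); lra).
  rewrite Rminus_0_r.
  eapply Rle_lt_trans.
  - apply abs_RInt_le_const.
    + pose proof (Rle_abs (- tau)) as Hn. rewrite Rabs_Ropp in Hn. lra.
    + apply (@ex_RInt_continuous R_CompleteNormedModule). intros z _. apply Hcont.
    + intros s Hst. apply (Hcur M s); lra.
  - replace (hbar / m * (2 * (c0 * (2 * (K / M))) ^ 2)) with (Cst / M ^ 2) by (unfold Cst; field; lra).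
    pose proof (Rabs_pos tau). apply final_arith; auto. all: try apply cond_pos. all: lra.
Qed.
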